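(* Let $(Q,\cdot)$ be a quadratical quasigroup and $a,b\in Q$ distinct. Then for every positive integer $t$: $t1\cdot t4=t2$, $t2\cdot t3=t4$, $t3\cdot t2=t1$ and $t4\cdot t1=t3$.
   Context: A quadratical quasigroup is a quasigroup satisfying $xy\cdot x=zx\cdot yz$ (equivalently, a groupoid satisfying $x\cdot x=x$, $yx\cdot xy=x$, $xy\cdot zw=xz\cdot yw$). The elements $tk$ ($t\ge1$, $k\in\{1,2,3,4\}$) are defined by $11=a$, $12=ab$, $13=ba$, $14=b$ and, for $n\ge2$, $n1=(n-1)1\cdot(n-1)2$, $n2=(n-1)2\cdot(n-1)4$, $n3=(n-1)3\cdot(n-1)1$, $n4=(n-1)4\cdot(n-1)3$. *)

(* Defs.v *)
Definition is_quasigroup {Q : Type} (op : Q -> Q -> Q) : Prop :=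
  (forall a b : Q, exists x, op a x = b /\ forall x', op a x' = b -> x' = x) /\
  (forall a b : Q, exists y, op y a = b /\ forall y', op y' a = b -> y' = y).

Definition is_quadratical {Q : Type} (op : Q -> Q -> Q) : Prop :=
  is_quasigroup op /\
  forall x y z : Q, op (op x y) x = op (op z x) (op y z).

(* row op a b n = (t1, t2, t3, t4) with t = n + 1:
   11 = a, 12 = ab, 13 = ba, 14 = b; and
   n1 = (n-1)1.(n-1)2, n2 = (n-1)2.(n-1)4, n3 = (n-1)3.(n-1)1, n4 = (n-1)4.(n-1)3. *)
Fixpoint row {Q : Type} (op : Q -> Q -> Q) (a b : Q) (n : nat) : Q * Q * Q * Q :=
  match n with
  | O => (a, op a b, op b a, b)
  | S m =>
      let '(x1, x2, x3, x4) := row op a b m in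
      (op x1 x2, op x2 x4, op x3 x1, op x4 x3)
  end.

(* elt op a b t k  is the element  tk  (t >= 1, k in {1,2,3,4}). *)
Definition elt {Q : Type} (op : Q -> Q -> Q) (a b : Q) (t : nat) (k : nat) : Q :=
  let '(x1, x2, x3, x4) := row op a b (Nat.pred t) in
  match k with
  | 1 => x1 | 2 => x2 | 3 => x3 | _ => x4
  end.

(* Main.v *)
Require Import Defs.
From Stdlib Require Import ClassicalEpsilon.

Section Quad.
Variable Q : Type.
Variable op : Q -> Q -> Q.
Hypothesis HQ : is_quadratical op.
Variable e0 : Q.

Definition ld (a b : Q) : Q :=
  proj1_sig (constructive_indefinite_description _ (proj1 (proj1 HQ) a b)).
Definition rd (b a : Q) : Q :=
  proj1_sig (constructive_indefinite_description _ (proj2 (proj1 HQ) a b)).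

Lemma ldK2 : forall x y : Q, op x (ld x y) = y.
Proof. intros x y. unfold ld. exact (proj1 (proj2_sig (constructive_indefinite_description _ (proj1 (proj1 HQ) x y)))). Qed.
Lemma ldK : forall x y : Q, ld x (op x y) = y.
Proof. intros x y. unfold ld. symmetry. exact (proj2 (proj2_sig (constructive_indefinite_description _ (proj1 (proj1 HQ) x (op x y)))) y eq_refl). Qed.
Lemma rdK2 : forall x y : Q, op (rd x y) y = x.
Proof. intros x y. unfold rd. exact (proj1 (proj2_sig (constructive_indefinite_description _ (proj2 (proj1 HQ) y x)))). Qed.
Lemma rdK : forall x y : Q, rd (op x y) y = x.
Proof. intros x y. unfold rd. symmetry. exact (proj2 (proj2_sig (constructive_indefinite_description _ (proj2 (proj1 HQ) y (op x y)))) x eq_refl). Qed.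
Lemma Qax : forall x y z : Q, op (op z x) (op y z) = op (op x y) x.
Proof. intros x y z. symmetry. apply (proj2 HQ). Qed.
Lemma E1 : forall x : Q, op x x = x.
Proof. intros x. pose proof (proj2 HQ x x x) as E.
  apply (f_equal (ld (op x x))) in E. rewrite !ldK in E. symmetry; exact E. Qed.
Lemma E2 : forall x y : Q, op (op y x) (op x y) = x.
Proof. intros x y. rewrite <- (proj2 HQ x x y). rewrite !E1. reflexivity. Qed.
Lemma A7 : forall v0 v1 v2 : Q, (ld (op v0 v1) (op (op v1 v2) v1)) = (op v2 v0).
Proof. intros v0 v1 v2. exact (eq_trans (f_equal (fun HH : Q => (ld (op v0 v1) HH)) (eq_sym (Qax v1 v2 v0))) (ldK (op v0 v1) (op v2 v0))). Qed.

Lemma A8 : forall v0 : Q, v0 = (op v0 v0).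
Proof. intros v0. exact (eq_trans (eq_sym (ldK (op v0 v0) v0)) (A7 v0 v0 v0)). Qed.

Lemma A11 : forall v0 v1 : Q, (op v0 (op v1 v0)) = (op (op v0 v1) v0).
Proof. intros v0 v1. exact (eq_trans (f_equal (fun HH : Q => (op HH (op v1 v0))) (A8 v0)) (Qax v0 v1 v0)). Qed.

Lemma A12 : forall v0 v1 : Q, (op v0 (op v1 v0)) = (op v1 (op v0 v1)).
Proof. intros v0 v1. exact (eq_trans (A11 v0 v1) (eq_trans (f_equal (fun HH : Q => (op (op v0 v1) HH)) (A8 v0)) (eq_trans (Qax v1 v0 v0) (eq_sym (A11 v1 v0))))). Qed.

Lemma A13 : forall v0 v1 : Q, v0 = (op (op v1 v0) (op v0 v1)).
Proof. intros v0 v1. exact (eq_trans (A8 v0) (eq_trans (f_equal (fun HH : Q => (op HH v0)) (A8 v0)) (eq_sym (Qax v0 v0 v1)))). Qed.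

Lemma A15 : forall v0 v1 : Q, (op (op (ld v0 v1) v0) v1) = v0.
Proof. intros v0 v1. exact (eq_trans (f_equal (fun HH : Q => (op (op (ld v0 v1) v0) HH)) (eq_sym (ldK2 v0 v1))) (eq_sym (A13 v0 (ld v0 v1)))). Qed.

Lemma A19 : forall v0 v1 : Q, (rd v0 v1) = (op (ld v0 v1) v0).
Proof. intros v0 v1. exact (eq_trans (f_equal (fun HH : Q => (rd HH v1)) (eq_sym (A15 v0 v1))) (rdK (op (ld v0 v1) v0) v1)). Qed.

Lemma A25 : forall v0 v1 : Q, (op v0 v1) = (op v1 (rd v1 v0)).
Proof. intros v0 v1. exact (eq_trans (f_equal (fun HH : Q => (op HH v1)) (eq_sym (ldK2 v1 v0))) (eq_trans (eq_sym (A11 v1 (ld v1 v0))) (f_equal (fun HH : Q => (op v1 HH)) (eq_sym (A19 v1 v0))))). Qed.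

Lemma A27 : forall v0 v1 : Q, (rd (op v0 v1) (rd v1 v0)) = v1.
Proof. intros v0 v1. exact (eq_trans (f_equal (fun HH : Q => (rd HH (rd v1 v0))) (A25 v0 v1)) (rdK v1 (rd v1 v0))). Qed.

Lemma A41 : forall v0 v1 : Q, (rd (op v0 (op v1 v0)) v1) = (op v1 v0).
Proof. intros v0 v1. exact (eq_trans (f_equal (fun HH : Q => (rd (op v0 (op v1 v0)) HH)) (eq_sym (rdK v1 v0))) (A27 v0 (op v1 v0))). Qed.

Lemma A63 : forall v0 v1 v2 : Q, (op (op (ld v0 v1) v2) v1) = (op v2 (op v0 v2)).
Proof. intros v0 v1 v2. exact (eq_trans (f_equal (fun HH : Q => (op (op (ld v0 v1) v2) HH)) (eq_sym (ldK2 v0 v1))) (eq_trans (Qax v2 v0 (ld v0 v1)) (eq_sym (A11 v2 v0)))). Qed.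

Lemma A65 : forall v0 v1 v2 : Q, (rd (op v0 (op v1 v0)) (op v1 v2)) = (op v2 v0).
Proof. intros v0 v1 v2. exact (eq_trans (f_equal (fun HH : Q => (rd HH (op v1 v2))) (A11 v0 v1)) (eq_trans (f_equal (fun HH : Q => (rd HH (op v1 v2))) (eq_sym (Qax v0 v1 v2))) (rdK (op v2 v0) (op v1 v2)))). Qed.

Lemma A70 : forall v0 v1 v2 : Q, (op (op v0 v1) (op v2 v0)) = (op v1 (op v2 v1)).
Proof. intros v0 v1 v2. exact (eq_trans (f_equal (fun HH : Q => (op (op v0 v1) HH)) (eq_sym (A7 v0 v1 v2))) (eq_trans (ldK2 (op v0 v1) (op (op v1 v2) v1)) (eq_sym (A11 v1 v2)))). Qed.

Lemma A135 : forall v0 v1 v2 : Q, (rd (op v0 (op v1 v0)) v2) = (op (ld v1 v2) v0).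
Proof. intros v0 v1 v2. exact (eq_trans (f_equal (fun HH : Q => (rd HH v2)) (eq_sym (A63 v1 v2 v0))) (rdK (op (ld v1 v2) v0) v2)). Qed.

Lemma A146 : forall v0 v1 v2 : Q, (op (ld v0 (op v1 v2)) v1) = (op v2 v0).
Proof. intros v0 v1 v2. exact (eq_trans (eq_sym (A135 v1 v0 (op v1 v2))) (eq_trans (f_equal (fun HH : Q => (rd HH (op v1 v2))) (eq_sym (A12 v0 v1))) (A65 v0 v1 v2))). Qed.

Lemma A149 : forall v0 v1 v2 : Q, (rd (op v0 v1) v2) = (ld v1 (op v2 v0)).
Proof. intros v0 v1 v2. exact (eq_trans (f_equal (fun HH : Q => (rd HH v2)) (eq_sym (A146 v1 v2 v0))) (rdK (ld v1 (op v2 v0)) v2)). Qed.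

Lemma A175 : forall v0 v1 v2 : Q, (ld (op v0 v1) (op v0 (op v1 v2))) = (op v0 v2).
Proof. intros v0 v1 v2. exact (eq_trans (eq_sym (A149 (op v1 v2) (op v0 v1) v0)) (eq_trans (f_equal (fun HH : Q => (rd HH v0)) (A70 v1 v2 v0)) (A41 v2 v0))). Qed.

Lemma A271 : forall v0 v1 v2 : Q, (op (op v0 v1) (op v0 v2)) = (op v0 (op v1 v2)).
Proof. intros v0 v1 v2. exact (eq_trans (f_equal (fun HH : Q => (op (op v0 v1) HH)) (eq_sym (A175 v0 v1 v2))) (ldK2 (op v0 v1) (op v0 (op v1 v2)))). Qed.

Lemma LDg : forall ca cb cc : Q, (op ca (op cb cc)) = (op (op ca cb) (op ca cc)).
Proof. intros ca cb cc. exact (eq_trans eq_refl (eq_sym (A271 ca cb cc))). Qed.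
Lemma B7 : forall v0 v1 v2 : Q, (ld (op v0 v1) (op (op v1 v2) v1)) = (op v2 v0).
Proof. intros v0 v1 v2. exact (eq_trans (f_equal (fun HH : Q => (ld (op v0 v1) HH)) (eq_sym (Qax v1 v2 v0))) (ldK (op v0 v1) (op v2 v0))). Qed.

Lemma B8 : forall v0 : Q, v0 = (op v0 v0).
Proof. intros v0. exact (eq_trans (eq_sym (ldK (op v0 v0) v0)) (B7 v0 v0 v0)). Qed.

Lemma B11 : forall v0 v1 : Q, (op v0 (op v1 v0)) = (op (op v0 v1) v0).
Proof. intros v0 v1. exact (eq_trans (f_equal (fun HH : Q => (op HH (op v1 v0))) (B8 v0)) (Qax v0 v1 v0)). Qed.

Lemma B12 : forall v0 v1 : Q, (op v0 (op v1 v0)) = (op v1 (op v0 v1)).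
Proof. intros v0 v1. exact (eq_trans (B11 v0 v1) (eq_trans (f_equal (fun HH : Q => (op (op v0 v1) HH)) (B8 v0)) (eq_trans (Qax v1 v0 v0) (eq_sym (B11 v1 v0))))). Qed.

Lemma B63 : forall v0 v1 v2 : Q, (op (op (ld v0 v1) v2) v1) = (op v2 (op v0 v2)).
Proof. intros v0 v1 v2. exact (eq_trans (f_equal (fun HH : Q => (op (op (ld v0 v1) v2) HH)) (eq_sym (ldK2 v0 v1))) (eq_trans (Qax v2 v0 (ld v0 v1)) (eq_sym (B11 v2 v0)))). Qed.

Lemma B64 : forall v0 v1 v2 : Q, (op v0 v1) = (op (op v2 v1) (op (ld v1 v0) v2)).
Proof. intros v0 v1 v2. exact (eq_trans (f_equal (fun HH : Q => (op HH v1)) (eq_sym (ldK2 v1 v0))) (eq_sym (Qax v1 (ld v1 v0) v2))). Qed.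

Lemma B65 : forall v0 v1 v2 : Q, (rd (op v0 (op v1 v0)) (op v1 v2)) = (op v2 v0).
Proof. intros v0 v1 v2. exact (eq_trans (f_equal (fun HH : Q => (rd HH (op v1 v2))) (B11 v0 v1)) (eq_trans (f_equal (fun HH : Q => (rd HH (op v1 v2))) (eq_sym (Qax v0 v1 v2))) (rdK (op v2 v0) (op v1 v2)))). Qed.

Lemma B135 : forall v0 v1 v2 : Q, (rd (op v0 (op v1 v0)) v2) = (op (ld v1 v2) v0).
Proof. intros v0 v1 v2. exact (eq_trans (f_equal (fun HH : Q => (rd HH v2)) (eq_sym (B63 v1 v2 v0))) (rdK (op (ld v1 v2) v0) v2)). Qed.

Lemma B146 : forall v0 v1 v2 : Q, (op (ld v0 (op v1 v2)) v1) = (op v2 v0).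
Proof. intros v0 v1 v2. exact (eq_trans (eq_sym (B135 v1 v0 (op v1 v2))) (eq_trans (f_equal (fun HH : Q => (rd HH (op v1 v2))) (eq_sym (B12 v0 v1))) (B65 v0 v1 v2))). Qed.

Lemma B194 : forall v0 v1 v2 : Q, (op (op v0 v1) (op v2 v1)) = (op (op v0 v2) v1).
Proof. intros v0 v1 v2. exact (eq_trans (f_equal (fun HH : Q => (op (op v0 v1) HH)) (eq_sym (B146 v1 v0 v2))) (eq_sym (B64 (op v0 v2) v1 v0))). Qed.

Lemma RDg : forall ca cb cc : Q, (op (op ca cb) cc) = (op (op ca cc) (op cb cc)).
Proof. intros ca cb cc. exact (eq_trans eq_refl (eq_sym (B194 ca cc cb))). Qed.
Lemma LDax : forall x y z : Q, op (op x y) (op x z) = op x (op y z).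
Proof. intros. symmetry. apply LDg. Qed.
Lemma RDax : forall x y z : Q, op (op x z) (op y z) = op (op x y) z.
Proof. intros. symmetry. apply RDg. Qed.
Lemma C10 : forall v0 v1 : Q, (rd v0 (ld v1 v0)) = v1.
Proof. intros v0 v1. exact (eq_trans (f_equal (fun HH : Q => (rd HH (ld v1 v0))) (eq_sym (ldK2 v1 v0))) (rdK v1 (ld v1 v0))). Qed.

Lemma C12 : forall v0 v1 : Q, (ld (op v0 v1) v1) = (op v1 v0).
Proof. intros v0 v1. exact (eq_trans (f_equal (fun HH : Q => (ld (op v0 v1) HH)) (eq_sym (E2 v1 v0))) (ldK (op v0 v1) (op v1 v0))). Qed.

Lemma C16 : forall v0 v1 : Q, (ld v0 v1) = (op v1 (rd v0 v1)).
Proof. intros v0 v1. exact (eq_trans (f_equal (fun HH : Q => (ld HH v1)) (eq_sym (rdK2 v0 v1))) (C12 (rd v0 v1) v1)). Qed.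

Lemma C22 : forall v0 v1 : Q, (op (op v0 v1) v0) = (op v0 (op v1 v0)).
Proof. intros v0 v1. exact (eq_trans (f_equal (fun HH : Q => (op (op v0 v1) HH)) (eq_sym (E1 v0))) (LDax v0 v1 v0)). Qed.

Lemma C63 : forall v0 v1 v2 : Q, (op v0 (op v1 v2)) = (op v1 (op (ld v1 v0) v2)).
Proof. intros v0 v1 v2. exact (eq_trans (f_equal (fun HH : Q => (op HH (op v1 v2))) (eq_sym (ldK2 v1 v0))) (LDax v1 (ld v1 v0) v2)). Qed.

Lemma C65 : forall v0 v1 v2 : Q, (rd (op v0 (op v1 v2)) (op v0 v2)) = (op v0 v1).
Proof. intros v0 v1 v2. exact (eq_trans (f_equal (fun HH : Q => (rd HH (op v0 v2))) (eq_sym (LDax v0 v1 v2))) (rdK (op v0 v1) (op v0 v2))). Qed.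

Lemma C120 : forall v0 v1 v2 : Q, (ld (op v0 v1) (op (op v0 v2) v1)) = (op v2 v1).
Proof. intros v0 v1 v2. exact (eq_trans (f_equal (fun HH : Q => (ld (op v0 v1) HH)) (eq_sym (RDax v0 v2 v1))) (ldK (op v0 v1) (op v2 v1))). Qed.

Lemma C123 : forall v0 v1 v2 : Q, (op (op v0 v1) v2) = (op (op v0 (rd v2 v1)) v1).
Proof. intros v0 v1 v2. exact (eq_trans (f_equal (fun HH : Q => (op (op v0 v1) HH)) (eq_sym (rdK2 v2 v1))) (RDax v0 (rd v2 v1) v1)). Qed.

Lemma C125 : forall v0 v1 v2 : Q, (ld v0 (op v1 (op v0 v2))) = (op (ld v0 v1) v2).
Proof. intros v0 v1 v2. exact (eq_trans (f_equal (fun HH : Q => (ld v0 HH)) (C63 v1 v0 v2)) (ldK v0 (op (ld v0 v1) v2))). Qed.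

Lemma C131 : forall v0 v1 v2 : Q, (rd (op v0 v1) (op v0 (ld v2 v1))) = (op v0 v2).
Proof. intros v0 v1 v2. exact (eq_trans (f_equal (fun HH : Q => (rd (op v0 HH) (op v0 (ld v2 v1)))) (eq_sym (ldK2 v2 v1))) (C65 v0 v2 (ld v2 v1))). Qed.

Lemma C135 : forall v0 v1 v2 : Q, (ld (op v0 v1) (op v2 v1)) = (op (ld v0 v2) v1).
Proof. intros v0 v1 v2. exact (eq_trans (f_equal (fun HH : Q => (ld (op v0 v1) (op HH v1))) (eq_sym (ldK2 v0 v2))) (C120 v0 v1 (ld v0 v2))). Qed.

Lemma C142 : forall v0 v1 v2 : Q, (rd (op (op v0 v1) v2) v1) = (op v0 (rd v2 v1)).
Proof. intros v0 v1 v2. exact (eq_trans (f_equal (fun HH : Q => (rd HH v1)) (C123 v0 v1 v2)) (rdK (op v0 (rd v2 v1)) v1)). Qed.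

Lemma C153 : forall v0 v1 v2 : Q, (ld v0 (op v1 v2)) = (op (ld (rd v0 v2) v1) v2).
Proof. intros v0 v1 v2. exact (eq_trans (f_equal (fun HH : Q => (ld HH (op v1 v2))) (eq_sym (rdK2 v0 v2))) (C135 (rd v0 v2) v2 v1)). Qed.

Lemma C247 : forall v0 v1 v2 : Q, (rd (op v0 (op v1 (rd v2 v0))) (ld v2 v0)) = (op v0 v1).
Proof. intros v0 v1 v2. exact (eq_trans (f_equal (fun HH : Q => (rd (op v0 (op v1 (rd v2 v0))) HH)) (C16 v2 v0)) (C65 v0 v1 (rd v2 v0))). Qed.

Lemma C301 : forall v0 v1 v2 : Q, (ld (rd v0 v1) (op v2 v0)) = (ld v0 (op v2 v1)).
Proof. intros v0 v1 v2. exact (eq_trans (f_equal (fun HH : Q => (ld (rd v0 v1) (op v2 HH))) (eq_sym (rdK2 v0 v1))) (eq_trans (C125 (rd v0 v1) v2 v1) (eq_sym (C153 v0 v2 v1)))). Qed.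

Lemma C302 : forall v0 v1 v2 : Q, (op (rd v0 v1) (ld v0 (op v2 v1))) = (op v2 v0).
Proof. intros v0 v1 v2. exact (eq_trans (f_equal (fun HH : Q => (op (rd v0 v1) HH)) (eq_sym (C301 v0 v1 v2))) (ldK2 (rd v0 v1) (op v2 v0))). Qed.

Lemma C307 : forall v0 v1 v2 : Q, (op (rd v0 v1) (ld v0 v2)) = (op (rd v2 v1) v0).
Proof. intros v0 v1 v2. exact (eq_trans (f_equal (fun HH : Q => (op (rd v0 v1) (ld v0 HH))) (eq_sym (rdK2 v2 v1))) (C302 v0 v1 (rd v2 v1))). Qed.

Lemma C318 : forall v0 v1 v2 : Q, (op (rd v0 v1) v2) = (op (rd (op v0 v2) v1) v0).
Proof. intros v0 v1 v2. exact (eq_trans (f_equal (fun HH : Q => (op (rd v0 v1) HH)) (eq_sym (ldK v0 v2))) (C307 v0 v1 (op v0 v2))). Qed.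

Lemma C326 : forall v0 v1 v2 : Q, (ld (rd (op v0 v1) v2) (op (rd v0 v2) v1)) = v0.
Proof. intros v0 v1 v2. exact (eq_trans (f_equal (fun HH : Q => (ld (rd (op v0 v1) v2) HH)) (C318 v0 v2 v1)) (ldK (rd (op v0 v1) v2) v0)). Qed.

Lemma C327 : forall v0 v1 v2 : Q, (rd (op (rd v0 v1) v2) v0) = (rd (op v0 v2) v1).
Proof. intros v0 v1 v2. exact (eq_trans (f_equal (fun HH : Q => (rd HH v0)) (C318 v0 v1 v2)) (rdK (rd (op v0 v2) v1) v0)). Qed.

Lemma C339 : forall v0 v1 v2 : Q, (ld (rd (op v0 v1) (ld v2 v0)) (op v2 v1)) = v0.
Proof. intros v0 v1 v2. exact (eq_trans (f_equal (fun HH : Q => (ld (rd (op v0 v1) (ld v2 v0)) (op HH v1))) (eq_sym (C10 v0 v2))) (C326 v0 v1 (ld v2 v0))). Qed.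

Lemma C340 : forall v0 v1 v2 : Q, (rd (op v0 v1) v2) = (rd (op v2 v1) (ld v0 v2)).
Proof. intros v0 v1 v2. exact (eq_trans (f_equal (fun HH : Q => (rd (op HH v1) v2)) (eq_sym (C10 v2 v0))) (C327 v2 (ld v0 v2) v1)). Qed.

Lemma C348 : forall v0 v1 v2 : Q, (ld (op v0 v1) (op v2 (op v1 (rd v2 v0)))) = v0.
Proof. intros v0 v1 v2. exact (eq_trans (f_equal (fun HH : Q => (ld HH (op v2 (op v1 (rd v2 v0))))) (eq_sym (C247 v0 v1 v2))) (C339 v0 (op v1 (rd v2 v0)) v2)). Qed.

Lemma C349 : forall v0 v1 v2 : Q, (op v0 v1) = (rd (op v2 (op v1 (rd v2 v0))) v0).
Proof. intros v0 v1 v2. exact (eq_trans (eq_sym (C247 v0 v1 v2)) (eq_sym (C340 v2 (op v1 (rd v2 v0)) v0))). Qed.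

Lemma C363 : forall v0 v1 v2 : Q, (op v0 (op v1 v0)) = (op v2 (op v1 (rd v2 v0))).
Proof. intros v0 v1 v2. exact (eq_trans (eq_sym (C22 v0 v1)) (eq_trans (f_equal (fun HH : Q => (op (op v0 v1) HH)) (eq_sym (C348 v0 v1 v2))) (ldK2 (op v0 v1) (op v2 (op v1 (rd v2 v0)))))). Qed.

Lemma C366 : forall v0 v1 v2 : Q, (op v0 (rd (op v1 v0) v2)) = (op v2 v1).
Proof. intros v0 v1 v2. exact (eq_trans (eq_sym (C142 v0 v2 (op v1 v0))) (eq_trans (f_equal (fun HH : Q => (rd (op (op v0 v2) (op v1 HH)) v2)) (eq_sym (rdK v0 v2))) (eq_sym (C349 v2 v1 (op v0 v2))))). Qed.

Lemma C370 : forall v0 v1 v2 : Q, (op v0 v1) = (op (ld v1 (op v2 v0)) v2).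
Proof. intros v0 v1 v2. exact (eq_trans (f_equal (fun HH : Q => (op v0 HH)) (eq_sym (C10 (op v2 v0) v1))) (C366 v0 v2 (ld v1 (op v2 v0)))). Qed.

Lemma C397 : forall v0 v1 v2 : Q, (op v0 (op v1 v2)) = (op v1 (op (ld v2 v0) v1)).
Proof. intros v0 v1 v2. exact (eq_trans (f_equal (fun HH : Q => (op v0 HH)) (eq_sym (C131 v1 v0 v2))) (eq_trans (C366 v0 v1 (op v1 (ld v2 v0))) (C22 v1 (ld v2 v0)))). Qed.

Lemma C812 : forall v0 v1 v2 v3 : Q, (op v0 (op (ld v1 v2) (rd v0 v3))) = (op v2 (op v3 v1)).
Proof. intros v0 v1 v2 v3. exact (eq_trans (eq_sym (C363 v3 (ld v1 v2) v0)) (eq_sym (C397 v2 v3 v1))). Qed.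

Lemma C1035 : forall v0 v1 v2 v3 : Q, (op v0 (op v1 v2)) = (op (op (rd v0 v3) v1) (op v3 v2)).
Proof. intros v0 v1 v2 v3. exact (eq_trans (f_equal (fun HH : Q => (op v0 HH)) (C370 v1 v2 (rd v0 v3))) (C812 v0 v2 (op (rd v0 v3) v1) v3)). Qed.

Lemma C1101 : forall v0 v1 v2 v3 : Q, (op (op v0 v1) (op v2 v3)) = (op (op v0 v2) (op v1 v3)).
Proof. intros v0 v1 v2 v3. exact (eq_trans (f_equal (fun HH : Q => (op (op HH v1) (op v2 v3))) (eq_sym (rdK v0 v2))) (eq_sym (C1035 (op v0 v2) v1 v3 v2))). Qed.

Lemma Lg : forall ca cb : Q, (op (op ca cb) cb) = (op (op ca (op ca cb)) (op cb (op cb ca))).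
Proof. intros ca cb. exact (eq_trans eq_refl (eq_sym (eq_trans (C1101 ca (op ca cb) cb (op cb ca)) (f_equal (fun HH : Q => (op (op ca cb) HH)) (E2 cb ca))))). Qed.
Lemma row_inv : forall (a b : Q) (n : nat), let '(x1, x2, x3, x4) := row op a b n in
  x2 = op x1 x4 /\ x3 = op x4 x1.
Proof.
  intros a b n. induction n as [|n IH]; simpl.
  - split; reflexivity.
  - destruct (row op a b n) as [[[x1 x2] x3] x4]. destruct IH as [H2 H3]. subst x2 x3.
    split.
    + apply Lg.
    + apply Lg.
Qed.
End Quad.

Theorem proposition3p5 (Q : Type) (op : Q -> Q -> Q) (a b : Q) :
  is_quadratical op -> a <> b ->
  forall t : nat, 1 <= t ->
    op (elt op a b t 1) (elt op a b t 4) = elt op a b t 2 /\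
    op (elt op a b t 2) (elt op a b t 3) = elt op a b t 4 /\
    op (elt op a b t 3) (elt op a b t 2) = elt op a b t 1 /\
    op (elt op a b t 4) (elt op a b t 1) = elt op a b t 3.
Proof.
  intros HQ _ t _. unfold elt.
  pose proof (row_inv Q op HQ a b (Nat.pred t)) as R.
  destruct (row op a b (Nat.pred t)) as [[[x1 x2] x3] x4].
  destruct R as [H2 H3]. subst x2 x3.
  split; [reflexivity|]. split; [apply (E2 Q op HQ)|]. split; [apply (E2 Q op HQ)|reflexivity].
Qed.
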